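(* The transitivity degree of Thompson's group $F$ is at most $2$.
   Context: Thompson's group $F$ is the group of orientation-preserving homeomorphisms of $[0,1]$ that are piecewise linear with finitely many points of non-differentiability, all at dyadic rationals, and whose slopes are integer powers of $2$. The transitivity degree of a group is the supremum of all $k$ such that it admits a faithful action on a set that is transitive on ordered $k$-tuples of distinct elements. *)

(* Defs.v *)
From Stdlib Require Import Reals ZArith Arith.
Open Scope R_scope.

Definition dyadic (x : R) : Prop :=
  exists (z : Z) (n : nat), x = IZR z / 2 ^ n.

(* Elements of Thompson's group F, represented as functions R -> R that are
   the identity outside [0,1] (so that equality of group elements is plain
   function equality). *)
Definition thompsonF (f : R -> R) : Prop :=
  (forall x, (x < 0 \/ 1 < x) -> f x = x) /\
  f 0 = 0 /\ f 1 = 1 /\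
  (forall x y, 0 <= x -> x < y -> y <= 1 -> f x < f y) /\
  exists (n : nat) (a : nat -> R),
    (0 < n)%nat /\ a 0%nat = 0 /\ a n = 1 /\
    (forall i, (i <= n)%nat -> dyadic (a i)) /\
    (forall i, (i < n)%nat -> a i < a (S i)) /\
    (forall i, (i < n)%nat -> exists (e : Z) (c : R),
        forall x, a i <= x <= a (S i) -> f x = powerRZ 2 e * x + c).

(* A (left) action of F on a type X, given by act : (R -> R) -> X -> X
   (only its values on elements of F matter); group law = composition. *)
Definition F_action (X : Type) (act : (R -> R) -> X -> X) : Prop :=
  (forall x, act (fun t => t) x = x) /\
  (forall f g, thompsonF f -> thompsonF g ->
     forall x, act (fun t => f (g t)) x = act f (act g x)).

Definition F_faithful (X : Type) (act : (R -> R) -> X -> X) : Prop :=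
  forall f, thompsonF f -> (forall x, act f x = x) -> f = (fun t => t).

Definition distinct_tuple (X : Type) (k : nat) (u : nat -> X) : Prop :=
  forall i j, (i < k)%nat -> (j < k)%nat -> u i = u j -> i = j.

Definition F_k_transitive (X : Type) (act : (R -> R) -> X -> X) (k : nat) : Prop :=
  (exists u : nat -> X, distinct_tuple X k u) /\
  forall u v : nat -> X, distinct_tuple X k u -> distinct_tuple X k v ->
    exists f, thompsonF f /\ forall i, (i < k)%nat -> act f (u i) = v i.

(* Main.v *)
Require Import Defs.
From Stdlib Require Import Reals ZArith Arith.
From Stdlib Require Import Lra Lia List ClassicalEpsilon Classical FunctionalExtensionality.
Import ListNotations.
Open Scope R_scope.


Lemma pow2_pos : forall n, 0 < 2 ^ n.
Proof. intro n; apply pow_lt; lra. Qed.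

Definition ongrid (N : nat) (x : R) := exists z : Z, x = IZR z / 2 ^ N.

Lemma ongrid_mono : forall N M x, (N <= M)%nat -> ongrid N x -> ongrid M x.
Proof.
  intros N M x HNM [z Hz]. exists (z * 2 ^ Z.of_nat (M - N))%Z.
  rewrite Hz, mult_IZR, <- pow_IZR.
  replace M with (N + (M - N))%nat at 2 by lia. rewrite pow_add.
  simpl IZR. field. split; apply pow_nonzero; lra.
Qed.

Lemma ongrid_INR : forall N j, ongrid N (INR j / 2 ^ N).
Proof. intros N j. exists (Z.of_nat j). now rewrite INR_IZR_INZ. Qed.

Lemma dyadic_ongrid : forall x, dyadic x -> exists N, ongrid N x.
Proof. intros x [z [n H]]. exists n, z. exact H. Qed.

Lemma ongrid_dyadic : forall N x, ongrid N x -> dyadic x.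
Proof. intros N x [z H]. exists z, N. exact H. Qed.

Lemma dyadic_plus : forall x y, dyadic x -> dyadic y -> dyadic (x + y).
Proof.
  intros x y Hx Hy. destruct (dyadic_ongrid _ Hx) as [n1 H1].
  destruct (dyadic_ongrid _ Hy) as [n2 H2].
  apply (ongrid_mono _ (n1 + n2)) in H1; [|lia].
  apply (ongrid_mono _ (n1 + n2)) in H2; [|lia].
  destruct H1 as [z1 ->]; destruct H2 as [z2 ->].
  exists (z1 + z2)%Z, (n1 + n2)%nat. rewrite plus_IZR. field. apply pow_nonzero; lra.
Qed.

Lemma dyadic_opp : forall x, dyadic x -> dyadic (- x).
Proof.
  intros x [z [n ->]]. exists (- z)%Z, n. rewrite opp_IZR. field. apply pow_nonzero; lra.
Qed.

Lemma dyadic_mult : forall x y, dyadic x -> dyadic y -> dyadic (x * y).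
Proof.
  intros x y [z1 [n1 ->]] [z2 [n2 ->]].
  exists (z1 * z2)%Z, (n1 + n2)%nat. rewrite mult_IZR, pow_add. field.
  split; apply pow_nonzero; lra.
Qed.

Lemma dyadic_P2 : forall e, dyadic (powerRZ 2 e).
Proof.
  intros [|p|p]; simpl.
  - exists 1%Z, 0%nat. simpl. lra.
  - exists (2 ^ Z.of_nat (Pos.to_nat p))%Z, 0%nat. rewrite <- pow_IZR. simpl. field.
  - exists 1%Z, (Pos.to_nat p). simpl. field. apply pow_nonzero; lra.
Qed.

Lemma dyadic_0 : dyadic 0.
Proof. exists 0%Z, 0%nat. simpl. lra. Qed.
Lemma dyadic_1 : dyadic 1.
Proof. exists 1%Z, 0%nat. simpl. lra. Qed.

Lemma finite_grid : forall K (h : nat -> R), (forall k, (k <= K)%nat -> dyadic (h k)) ->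
  exists N, forall k, (k <= K)%nat -> ongrid N (h k).
Proof.
  induction K; intros h H.
  - destruct (dyadic_ongrid _ (H 0%nat (le_n 0))) as [N HN]. exists N.
    intros k Hk. replace k with 0%nat by lia. exact HN.
  - destruct (IHK h) as [N HN]. { intros k Hk. apply H. lia. }
    destruct (dyadic_ongrid _ (H (S K) (le_n _))) as [N2 HN2].
    exists (Nat.max N N2). intros k Hk.
    destruct (Nat.eq_dec k (S K)) as [->|Hne].
    + apply (ongrid_mono N2); [lia|exact HN2].
    + apply (ongrid_mono N); [lia|]. apply HN. lia.
Qed.

Lemma search : forall n (a : nat -> R) t, a O <= t -> t < a n ->
  exists i, (i < n)%nat /\ a i <= t /\ t < a (S i).
Proof.
  induction n; intros a t H0 H1.
  - lra.
  - destruct (Rlt_dec t (a n)) as [Hl|Hl].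
    + destruct (IHn a t H0 Hl) as [i [Hi [Ha Hb]]]. exists i. split; [lia|auto].
    + exists n. split; [lia|]. split; [lra|auto].
Qed.

Lemma grid_gap : forall M j z, ongrid M z -> INR j / 2 ^ M < z -> INR (S j) / 2 ^ M <= z.
Proof.
  intros M j z [w ->] H.
  assert (P: 0 < 2 ^ M) by apply pow2_pos.
  assert (H1: INR j < IZR w).
  { apply Rmult_lt_reg_r with (/ 2 ^ M). apply Rinv_0_lt_compat; auto. exact H. }
  rewrite INR_IZR_INZ in H1. apply lt_IZR in H1.
  assert (H2: INR (S j) <= IZR w). { rewrite INR_IZR_INZ. apply IZR_le. lia. }
  unfold Rdiv. apply Rmult_le_compat_r; [left; apply Rinv_0_lt_compat; auto | exact H2].
Qed.

Lemma cell_lemma : forall n (a : nat -> R) M j, a O <= INR j / 2 ^ M -> INR j / 2 ^ M < a n ->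
  (forall i, (i <= n)%nat -> ongrid M (a i)) ->
  exists i, (i < n)%nat /\ a i <= INR j / 2 ^ M /\ INR (S j) / 2 ^ M <= a (S i).
Proof.
  intros n a M j H0 H1 Hg.
  destruct (search n a _ H0 H1) as [i [Hi [Ha Hb]]].
  exists i. split; [auto|split; [auto|]]. apply grid_gap; auto.
Qed.

Lemma INR_div_range : forall N j, (j <= 2 ^ N)%nat -> 0 <= INR j / 2 ^ N <= 1.
Proof.
  intros N j Hj. assert (P := pow2_pos N). split.
  - unfold Rdiv; apply Rmult_le_pos; [apply pos_INR | left; apply Rinv_0_lt_compat; auto].
  - apply le_INR in Hj. rewrite pow_INR in Hj. replace (INR 2) with 2 in Hj by (simpl; lra).
    apply Rmult_le_reg_r with (2 ^ N); auto. unfold Rdiv. rewrite Rmult_assoc, Rinv_l; lra.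
Qed.

Lemma INR_div_lt1 : forall N j, (j < 2 ^ N)%nat -> INR j / 2 ^ N < 1.
Proof.
  intros N j Hj. assert (P := pow2_pos N).
  apply lt_INR in Hj. rewrite pow_INR in Hj. replace (INR 2) with 2 in Hj by (simpl; lra).
  apply Rmult_lt_reg_r with (2 ^ N); auto. unfold Rdiv. rewrite Rmult_assoc, Rinv_l; lra.
Qed.

Lemma F_strict : forall f, thompsonF f -> forall x y, x < y -> f x < f y.
Proof.
  intros f [Hout [H0 [H1 [Hinc _]]]] x y Hxy.
  assert (Hr: forall z, 0 <= z <= 1 -> 0 <= f z <= 1).
  { intros z [Hz0 Hz1]. split.
    - destruct (Req_dec z 0) as [->|Hne]; [lra|]. rewrite <- H0. left. apply Hinc; lra.
    - destruct (Req_dec z 1) as [->|Hne]; [lra|]. rewrite <- H1. left. apply Hinc; lra. }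
  destruct (Rlt_dec x 0) as [Hx0|Hx0]; destruct (Rlt_dec 1 y) as [Hy1|Hy1].
  - rewrite (Hout x), (Hout y); auto.
  - rewrite (Hout x) by auto. destruct (Rlt_dec y 0).
    + rewrite (Hout y) by auto; lra.
    + pose proof (Hr y ltac:(lra)); lra.
  - rewrite (Hout y) by auto. destruct (Rlt_dec 1 x).
    + rewrite (Hout x) by auto; lra.
    + pose proof (Hr x ltac:(lra)); lra.
  - apply Hinc; lra.
Qed.

Lemma F_le : forall f, thompsonF f -> forall x y, x <= y -> f x <= f y.
Proof.
  intros f Hf x y [H|H]. left; apply F_strict; auto. subst; lra.
Qed.

Lemma F_lt_inv : forall f, thompsonF f -> forall x y, f x < f y -> x < y.
Proof.
  intros f Hf x y H. destruct (Rlt_dec x y); auto.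
  assert (f y <= f x) by (apply F_le; auto; lra). lra.
Qed.

Lemma F_le_inv : forall f, thompsonF f -> forall x y, f x <= f y -> x <= y.
Proof.
  intros f Hf x y H. destruct (Rle_dec x y); auto.
  assert (f y < f x) by (apply F_strict; auto; lra). lra.
Qed.

Lemma F_inj : forall f, thompsonF f -> forall x y, f x = f y -> x = y.
Proof.
  intros f Hf x y H. apply Rle_antisym; apply (F_le_inv f Hf); lra.
Qed.

Lemma F_0 : forall f, thompsonF f -> f 0 = 0.
Proof. intros f H; apply H. Qed.
Lemma F_1 : forall f, thompsonF f -> f 1 = 1.
Proof. intros f H; apply H. Qed.
Lemma F_out : forall f, thompsonF f -> forall x, (x < 0 \/ 1 < x) -> f x = x.
Proof. intros f H; apply H. Qed.

Lemma F_range : forall f, thompsonF f -> forall x, 0 <= x <= 1 -> 0 <= f x <= 1.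
Proof.
  intros f Hf x Hx. rewrite <- (F_0 f Hf) at 1. rewrite <- (F_1 f Hf).
  split; apply F_le; auto; lra.
Qed.

Lemma a_mono : forall n (a : nat -> R), (forall i, (i < n)%nat -> a i < a (S i)) ->
  forall i j, (i <= j)%nat -> (j <= n)%nat -> a i <= a j.
Proof.
  intros n a Ha i j Hij. induction Hij; intros Hn.
  - lra.
  - assert (a m < a (S m)) by (apply Ha; lia). specialize (IHHij ltac:(lia)). lra.
Qed.

Lemma piece_solve : forall (f : R -> R) P c u v y, 0 < P -> u <= v ->
  (forall x, u <= x <= v -> f x = P * x + c) -> f u <= y <= f v ->
  u <= (y - c) / P <= v /\ f ((y - c) / P) = y.
Proof.
  intros f P c u v y HP Huv Hf Hy.
  rewrite (Hf u) in Hy by lra. rewrite (Hf v) in Hy by lra.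
  set (x := (y - c) / P).
  assert (Hx : P * x = y - c) by (unfold x; field; lra).
  assert (Hux : u <= x).
  { destruct (Rle_dec u x); auto. assert (P * x < P * u) by (apply Rmult_lt_compat_l; lra). lra. }
  assert (Hxv : x <= v).
  { destruct (Rle_dec x v); auto. assert (P * v < P * x) by (apply Rmult_lt_compat_l; lra). lra. }
  split; [lra|]. rewrite Hf by lra. lra.
Qed.

Lemma b_dyadic : forall f n (a : nat -> R), a O = 0 -> f 0 = 0 ->
  (forall i, (i < n)%nat -> a i < a (S i)) -> (forall i, (i <= n)%nat -> dyadic (a i)) ->
  (forall i, (i < n)%nat -> exists (e : Z) (c : R),
        forall x, a i <= x <= a (S i) -> f x = powerRZ 2 e * x + c) ->
  forall i, (i <= n)%nat -> dyadic (f (a i)).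
Proof.
  intros f n a Ha0 Hf0 Hinc Hd Hp. induction i; intros Hi.
  - rewrite Ha0, Hf0. apply dyadic_0.
  - destruct (Hp i ltac:(lia)) as [e [c Hc]].
    assert (Hlt := Hinc i ltac:(lia)).
    assert (E : f (a (S i)) = f (a i) + powerRZ 2 e * (a (S i) + - a i)).
    { rewrite (Hc (a (S i))) by lra. rewrite (Hc (a i)) by lra. ring. }
    rewrite E. apply dyadic_plus. apply IHi; lia.
    apply dyadic_mult. apply dyadic_P2. apply dyadic_plus. apply Hd; lia. apply dyadic_opp, Hd; lia.
Qed.

Lemma F_dyadic : forall f, thompsonF f -> forall x, dyadic x -> 0 <= x <= 1 -> dyadic (f x).
Proof.
  intros f Hf x Hx Hr.
  destruct (Req_dec x 1) as [->|Hne]. { rewrite F_1 by auto. apply dyadic_1. }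
  pose proof Hf as [Hout [H0 [H1 [Hinc [n [a [Hn [Ha0 [Han [Hd [Hi Hp]]]]]]]]]]].
  destruct (search n a x) as [i [Hin [Hai Hai1]]]; [lra|lra|].
  destruct (Hp i Hin) as [e [c Hc]].
  assert (E : f x = f (a i) + powerRZ 2 e * (x + - a i)).
  { rewrite (Hc x) by lra. rewrite (Hc (a i)) by (assert (a i < a (S i)) by auto; lra). ring. }
  rewrite E. apply dyadic_plus. apply (b_dyadic f n a); auto; lia.
  apply dyadic_mult. apply dyadic_P2. apply dyadic_plus; auto. apply dyadic_opp, Hd; lia.
Qed.

Lemma F_surj : forall f, thompsonF f -> forall y, exists x, f x = y.
Proof.
  intros f Hf y.
  destruct (Rlt_dec y 0) as [Hy|Hy]. { exists y. apply F_out; auto. }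
  destruct (Rlt_dec 1 y) as [Hy'|Hy']. { exists y. apply F_out; auto. }
  destruct (Req_dec y 1) as [->|Hne]. { exists 1. apply F_1; auto. }
  pose proof Hf as [Hout [H0 [H1 [Hinc [n [a [Hn [Ha0 [Han [Hd [Hi Hp]]]]]]]]]]].
  destruct (search n (fun i => f (a i)) y) as [i [Hin [Hai Hai1]]]; simpl.
  { rewrite Ha0, H0; lra. } { rewrite Han, H1; lra. }
  destruct (Hp i Hin) as [e [c Hc]].
  assert (HP := powerRZ_lt 2 e ltac:(lra)).
  assert (Hlt := Hi i Hin).
  destruct (piece_solve f (powerRZ 2 e) c (a i) (a (S i)) y) as [_ H]; auto; try lra.
  eauto.
Qed.

Definition finv (f : R -> R) : R -> R := fun y => epsilon (inhabits 0) (fun x => f x = y).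

Lemma finv_r : forall f, thompsonF f -> forall y, f (finv f y) = y.
Proof.
  intros f Hf y. unfold finv. apply (epsilon_spec (inhabits 0) (fun x => f x = y)). apply F_surj; auto.
Qed.

Lemma finv_l : forall f, thompsonF f -> forall x, finv f (f x) = x.
Proof.
  intros f Hf x. apply (F_inj f Hf). apply finv_r; auto.
Qed.

Lemma F_inv : forall f, thompsonF f -> thompsonF (finv f).
Proof.
  intros f Hf.
  pose proof Hf as [Hout [H0 [H1 [Hinc [n [a [Hn [Ha0 [Han [Hd [Hi Hp]]]]]]]]]]].
  split; [|split; [|split; [|split]]].
  - intros x Hx. rewrite <- (Hout x Hx) at 1. apply finv_l; auto.
  - rewrite <- H0 at 1. apply finv_l; auto.
  - rewrite <- H1 at 1. apply finv_l; auto.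
  - intros x y _ Hxy _. apply (F_lt_inv f Hf). rewrite !finv_r; auto.
  - exists n, (fun i => f (a i)). split; [auto|]. split; [rewrite Ha0; auto|].
    split; [rewrite Han; auto|]. split; [|split].
    + intros i Hin. apply (b_dyadic f n a); auto.
    + intros i Hin. apply F_strict; auto.
    + intros i Hin. destruct (Hp i Hin) as [e [c Hc]].
      assert (HP := powerRZ_lt 2 e ltac:(lra)).
      assert (Hlt := Hi i Hin).
      assert (Einv : powerRZ 2 e * powerRZ 2 (- e) = 1).
      { rewrite <- powerRZ_add by lra. replace (e + - e)%Z with 0%Z by lia. reflexivity. }
      exists (- e)%Z, (- c * powerRZ 2 (- e)). intros y Hy.
      destruct (piece_solve f (powerRZ 2 e) c (a i) (a (S i)) y) as [_ H]; auto; try lra.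
      rewrite <- H at 1. rewrite finv_l by auto. rewrite powerRZ_neg'. field. lra.
Qed.

Definition grid (N : nat) (f : R -> R) : Prop :=
  forall j, (j < 2 ^ N)%nat -> exists (e : Z) (c : R),
    forall x, INR j / 2 ^ N <= x <= INR (S j) / 2 ^ N -> f x = powerRZ 2 e * x + c.

Lemma INR_pow2 : forall N, INR (2 ^ N) = 2 ^ N.
Proof. intro N. rewrite pow_INR. simpl INR. f_equal. Qed.

Lemma to_grid : forall f, thompsonF f -> exists N, grid N f.
Proof.
  intros f Hf.
  pose proof Hf as [Hout [H0 [H1 [Hinc [n [a [Hn [Ha0 [Han [Hd [Hi Hp]]]]]]]]]]].
  destruct (finite_grid n a Hd) as [N HN]. exists N.
  intros j Hj.
  destruct (cell_lemma n a N j) as [i [Hin [Hl Hr]]]; auto.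
  - rewrite Ha0. apply INR_div_range. lia.
  - rewrite Han. apply INR_div_lt1; auto.
  - destruct (Hp i Hin) as [e [c Hc]]. exists e, c. intros x Hx. apply Hc. lra.
Qed.

Lemma grid_refine : forall f N M, grid N f -> (N <= M)%nat -> grid M f.
Proof.
  intros f N M Hg HNM j Hj.
  destruct (cell_lemma (2 ^ N) (fun i => INR i / 2 ^ N) M j) as [i [Hin [Hl Hr]]].
  - simpl. replace (0 / 2 ^ N) with 0 by (field; apply pow_nonzero; lra).
    apply INR_div_range. lia.
  - rewrite INR_pow2. replace (2 ^ N / 2 ^ N) with 1 by (field; apply pow_nonzero; lra).
    apply INR_div_lt1; auto.
  - intros i _. apply (ongrid_mono N); auto. apply ongrid_INR.
  - destruct (Hg i Hin) as [e [c Hc]]. exists e, c. intros x Hx. apply Hc. lra.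
Qed.

Lemma of_grid : forall f N,
  (forall x, (x < 0 \/ 1 < x) -> f x = x) -> f 0 = 0 -> f 1 = 1 ->
  (forall x y, 0 <= x -> x < y -> y <= 1 -> f x < f y) -> grid N f -> thompsonF f.
Proof.
  intros f N Hout H0 H1 Hinc Hg.
  split; [auto|split; [auto|split; [auto|split; [auto|]]]].
  exists (2 ^ N)%nat, (fun i => INR i / 2 ^ N).
  assert (P := pow2_pos N).
  split; [|split; [|split; [|split; [|split]]]].
  - apply Nat.neq_0_lt_0. apply Nat.pow_nonzero. lia.
  - simpl. field. lra.
  - rewrite INR_pow2. field. lra.
  - intros i _. apply (ongrid_dyadic N). apply ongrid_INR.
  - intros i _. unfold Rdiv. apply Rmult_lt_compat_r. apply Rinv_0_lt_compat; auto.
    apply lt_INR. lia.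
  - exact Hg.
Qed.

Lemma F_comp : forall f g, thompsonF f -> thompsonF g -> thompsonF (fun t => f (g t)).
Proof.
  intros f g Hf Hg.
  destruct (to_grid f Hf) as [N1 G1].
  destruct (to_grid g Hg) as [N2 G2].
  set (h := finv g). assert (Hh : thompsonF h) by (apply F_inv; auto).
  destruct (finite_grid (2 ^ N1) (fun k => h (INR k / 2 ^ N1))) as [M0 HM0].
  { intros k Hk. apply F_dyadic; auto. apply (ongrid_dyadic N1), ongrid_INR.
    apply INR_div_range; auto. }
  apply (of_grid _ (M0 + N2)).
  - intros x Hx. rewrite (F_out g Hg x Hx). apply F_out; auto.
  - rewrite F_0, F_0; auto.
  - rewrite F_1, F_1; auto.
  - intros x y _ Hxy _. apply F_strict; auto. apply F_strict; auto.
  - intros j Hj. set (M := (M0 + N2)%nat) in *.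
    destruct (grid_refine g N2 M G2 ltac:(unfold M; lia) j Hj) as [e [d Hd]].
    set (l := INR j / 2 ^ M). set (r := INR (S j) / 2 ^ M).
    assert (Hlr : l < r).
    { unfold l, r. unfold Rdiv. apply Rmult_lt_compat_r.
      apply Rinv_0_lt_compat, pow2_pos. apply lt_INR. lia. }
    assert (Hl0 : 0 <= l) by (apply INR_div_range; lia).
    assert (Hr1 : r <= 1) by (apply INR_div_range; lia).
    assert (Hgl : g l < g r) by (apply F_strict; auto).
    assert (Hgl0 : 0 <= g l) by (rewrite <- (F_0 g Hg); apply F_le; auto).
    assert (Hgr1 : g r <= 1) by (rewrite <- (F_1 g Hg); apply F_le; auto).
    destruct (search (2 ^ N1) (fun i => INR i / 2 ^ N1) (g l)) as [k [Hk [Hk1 Hk2]]].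
    { simpl. replace (0 / 2 ^ N1) with 0 by (field; apply pow_nonzero; lra). auto. }
    { rewrite INR_pow2. replace (2 ^ N1 / 2 ^ N1) with 1 by (field; apply pow_nonzero; lra). lra. }
    cbv beta in Hk1, Hk2.
    assert (Hgr : g r <= INR (S k) / 2 ^ N1).
    { destruct (Rle_dec (g r) (INR (S k) / 2 ^ N1)) as [H|H]; auto. exfalso.
      set (y := INR (S k) / 2 ^ N1) in *.
      set (t := h y).
      assert (Hgt : g t = y) by (apply finv_r; auto).
      assert (Hlt : l < t) by (apply (F_lt_inv g Hg); lra).
      assert (Htr : t < r) by (apply (F_lt_inv g Hg); lra).
      assert (Ht : ongrid M t).
      { apply (ongrid_mono M0); [unfold M; lia|]. apply (HM0 (S k)). lia. }
      pose proof (grid_gap M j t Ht Hlt). unfold r in Htr. lra. }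
    destruct (G1 k Hk) as [e' [c' Hc']].
    exists (e' + e)%Z, (powerRZ 2 e' * d + c'). intros x Hx.
    assert (Hgx1 : g l <= g x) by (apply F_le; auto; apply Hx).
    assert (Hgx2 : g x <= g r) by (apply F_le; auto; apply Hx).
    rewrite (Hc' (g x)) by lra. rewrite (Hd x) by auto.
    rewrite powerRZ_add by lra. ring.
Qed.

Definition cc (x : R) : R :=
  if Rle_dec x (3/4) then x else if Rle_dec x (7/8) then x/2 + 3/8
  else if Rle_dec x (15/16) then x - 1/16 else if Rle_dec x 1 then 2*x - 1 else x.

Definition kk (x : R) : R :=
  if Rle_dec x 0 then x else if Rle_dec x (1/8) then x/2
  else if Rle_dec x (3/16) then x - 1/16 else if Rle_dec x (1/4) then 2*x - 1/4 else x.

Lemma P2_0 : powerRZ 2 0 = 1. Proof. reflexivity. Qed.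
Lemma P2_1 : powerRZ 2 1 = 2. Proof. simpl. ring. Qed.
Lemma P2_m1 : powerRZ 2 (-1) = 1/2. Proof. simpl. field. Qed.

Lemma dy : forall (z : Z) n, dyadic (IZR z / 2 ^ n).
Proof. intros z n. exists z, n. reflexivity. Qed.

Lemma cc_F : thompsonF cc.
Proof.
  split; [|split; [|split; [|split]]].
  - intros x Hx. unfold cc. repeat destruct Rle_dec; lra.
  - unfold cc. repeat destruct Rle_dec; lra.
  - unfold cc. repeat destruct Rle_dec; lra.
  - intros x y H0 Hxy H1. unfold cc. repeat destruct Rle_dec; lra.
  - exists 4%nat, (fun i : nat => match i with O => 0 | 1%nat => 3/4 | 2%nat => 7/8 | 3%nat => 15/16 | _ => 1 end).
    split; [lia|]. split; [reflexivity|]. split; [reflexivity|]. split; [|split].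
    + intros i Hi. destruct i as [|[|[|[|i]]]].
      * apply dyadic_0.
      * replace (3/4) with (IZR 3 / 2 ^ 2) by (simpl; field). apply dy.
      * replace (7/8) with (IZR 7 / 2 ^ 3) by (simpl; field). apply dy.
      * replace (15/16) with (IZR 15 / 2 ^ 4) by (simpl; field). apply dy.
      * apply dyadic_1.
    + intros i Hi. destruct i as [|[|[|[|i]]]]; try lra. lia.
    + intros i Hi. destruct i as [|[|[|[|i]]]]; try lia.
      * exists 0%Z, 0. intros x Hx. rewrite P2_0. unfold cc. repeat destruct Rle_dec; lra.
      * exists (-1)%Z, (3/8). intros x Hx. rewrite P2_m1. unfold cc. repeat destruct Rle_dec; lra.
      * exists 0%Z, (-1/16). intros x Hx. rewrite P2_0. unfold cc. repeat destruct Rle_dec; lra.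
      * exists 1%Z, (-1). intros x Hx. rewrite P2_1. unfold cc. repeat destruct Rle_dec; lra.
Qed.

Lemma kk_F : thompsonF kk.
Proof.
  split; [|split; [|split; [|split]]].
  - intros x Hx. unfold kk. repeat destruct Rle_dec; lra.
  - unfold kk. repeat destruct Rle_dec; lra.
  - unfold kk. repeat destruct Rle_dec; lra.
  - intros x y H0 Hxy H1. unfold kk. repeat destruct Rle_dec; lra.
  - exists 4%nat, (fun i : nat => match i with O => 0 | 1%nat => 1/8 | 2%nat => 3/16 | 3%nat => 1/4 | _ => 1 end).
    split; [lia|]. split; [reflexivity|]. split; [reflexivity|]. split; [|split].
    + intros i Hi. destruct i as [|[|[|[|i]]]].
      * apply dyadic_0.
      * replace (1/8) with (IZR 1 / 2 ^ 3) by (simpl; field). apply dy.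
      * replace (3/16) with (IZR 3 / 2 ^ 4) by (simpl; field). apply dy.
      * replace (1/4) with (IZR 1 / 2 ^ 2) by (simpl; field). apply dy.
      * apply dyadic_1.
    + intros i Hi. destruct i as [|[|[|[|i]]]]; try lra. lia.
    + intros i Hi. destruct i as [|[|[|[|i]]]]; try lia.
      * exists (-1)%Z, 0. intros x Hx. rewrite P2_m1. unfold kk. repeat destruct Rle_dec; lra.
      * exists 0%Z, (-1/16). intros x Hx. rewrite P2_0. unfold kk. repeat destruct Rle_dec; lra.
      * exists 1%Z, (-1/4). intros x Hx. rewrite P2_1. unfold kk. repeat destruct Rle_dec; lra.
      * exists 0%Z, 0. intros x Hx. rewrite P2_0. unfold kk. repeat destruct Rle_dec; lra.
Qed.

Lemma cc_low : forall t, t <= 3/4 -> cc t = t.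
Proof. intros t H. unfold cc. repeat destruct Rle_dec; lra. Qed.
Lemma cc_high : forall t, 3/4 <= t -> 3/4 <= cc t.
Proof. intros t H. unfold cc. repeat destruct Rle_dec; lra. Qed.
Lemma cc_78 : cc (7/8) <> 7/8.
Proof. unfold cc. repeat destruct Rle_dec; lra. Qed.
Lemma kk_high : forall t, 1/4 <= t -> kk t = t.
Proof. intros t H. unfold kk. repeat destruct Rle_dec; lra. Qed.
Lemma kk_1 : kk (1/8) <> 1/8.
Proof. unfold kk. repeat destruct Rle_dec; lra. Qed.
Lemma kk_2 : kk (kk (1/8)) <> 1/8.
Proof. unfold kk at 2. destruct (Rle_dec (1/8) 0); [lra|]. destruct (Rle_dec (1/8) (1/8)); [|lra].
  unfold kk. repeat destruct Rle_dec; lra. Qed.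
Lemma kk_3 : kk (kk (kk (1/8))) <> 1/8.
Proof.
  assert (E1 : kk (1/8) = 1/16) by (unfold kk; repeat destruct Rle_dec; lra).
  assert (E2 : kk (1/16) = 1/32) by (unfold kk; repeat destruct Rle_dec; lra).
  assert (E3 : kk (1/32) = 1/64) by (unfold kk; repeat destruct Rle_dec; lra).
  rewrite E1, E2, E3. lra.
Qed.

Lemma act_comp : forall X act, F_action X act -> forall f g, thompsonF f -> thompsonF g ->
  forall p, act (fun t => f (g t)) p = act f (act g p).
Proof. intros X act [_ H] f g Hf Hg p. apply H; auto. Qed.

Lemma act_id : forall X act, F_action X act -> forall p, act (fun t => t) p = p.
Proof. intros X act [H _] p. apply H. Qed.

Lemma act_ext : forall X (act : (R -> R) -> X -> X) f g, (forall t, f t = g t) -> forall p, act f p = act g p.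
Proof. intros X act f g H p. replace f with g; auto. symmetry; apply functional_extensionality; auto. Qed.

Lemma act_inv_l : forall X act, F_action X act -> forall f, thompsonF f ->
  forall p, act (finv f) (act f p) = p.
Proof.
  intros X act Ha f Hf p. rewrite <- (act_comp X act Ha (finv f) f); [|apply F_inv; auto|auto].
  rewrite (act_ext X act _ (fun t => t)). apply act_id; auto. intro t; apply finv_l; auto.
Qed.

Lemma act_inv_r : forall X act, F_action X act -> forall f, thompsonF f ->
  forall p, act f (act (finv f) p) = p.
Proof.
  intros X act Ha f Hf p. rewrite <- (act_comp X act Ha f (finv f)); [|auto|apply F_inv; auto].
  rewrite (act_ext X act _ (fun t => t)). apply act_id; auto. intro t; apply finv_r; auto.
Qed.

Lemma act_inj : forall X act, F_action X act -> forall f, thompsonF f ->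
  forall p q, act f p = act f q -> p = q.
Proof.
  intros X act Ha f Hf p q H. rewrite <- (act_inv_l X act Ha f Hf p), H. apply act_inv_l; auto.
Qed.

Lemma act_moved : forall X act, F_faithful X act -> forall f, thompsonF f ->
  (exists t, f t <> t) -> exists p, act f p <> p.
Proof.
  intros X act Hfa f Hf [t Ht]. apply NNPP. intro H. apply Ht.
  assert (E : f = fun t => t).
  { apply Hfa; auto. intro x. apply NNPP. intro H'. apply H. exists x. auto. }
  rewrite E. reflexivity.
Qed.

Lemma act_inv_pair : forall X act, F_action X act -> forall g gi, thompsonF g -> thompsonF gi ->
  (forall t, gi (g t) = t) -> forall p, act gi (act g p) = p.
Proof.
  intros X act Ha g gi Hg Hgi Hinv p. rewrite <- (act_comp X act Ha gi g); auto.
  rewrite (act_ext X act _ (fun t => t)); auto. apply act_id; auto.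
Qed.

Lemma act_conj : forall X act, F_action X act -> forall g w gi, thompsonF g -> thompsonF w -> thompsonF gi ->
  forall p, act (fun t => g (w (gi t))) p = act g (act w (act gi p)).
Proof.
  intros X act Ha g w gi Hg Hw Hgi p.
  rewrite (act_comp X act Ha g (fun t => w (gi t))); [|auto|apply F_comp; auto].
  rewrite (act_comp X act Ha w gi); auto.
Qed.

Lemma conj_comm_c : forall g gi w, thompsonF g -> thompsonF gi -> thompsonF w ->
  (forall t, g (gi t) = t) -> (forall t, gi (g t) = t) ->
  (forall t, 1/2 <= t -> w t = t) -> g (1/2) <= 3/4 ->
  forall t, g (w (gi (cc t))) = cc (g (w (gi t))).
Proof.
  intros g gi w Hg Hgi Hw Hr Hl HW Hg12 t.
  set (y := fun t => g (w (gi t))).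
  assert (Hy : thompsonF y) by (unfold y; apply F_comp; [auto|apply F_comp; auto]).
  assert (Hy1 : forall t, 3/4 <= t -> y t = t).
  { intros s Hs. unfold y. assert (1/2 <= gi s).
    { rewrite <- (Hl (1/2)). apply F_le; auto. lra. }
    rewrite HW; auto. }
  assert (Hy2 : forall t, t <= 3/4 -> y t <= 3/4).
  { intros s Hs. apply Rle_trans with (y (3/4)); [apply F_le; auto | rewrite Hy1; lra]. }
  change (y (cc t) = cc (y t)).
  destruct (Rle_dec t (3/4)).
  - rewrite (cc_low t) by auto. rewrite cc_low; auto.
  - rewrite (Hy1 t) by lra. apply Hy1. apply cc_high. lra.
Qed.

Lemma w_comm_c : forall w, thompsonF w -> (forall t, 1/2 <= t -> w t = t) ->
  forall t, w (cc t) = cc (w t).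
Proof.
  intros w Hw HW t. destruct (Rle_dec t (3/4)).
  - rewrite (cc_low t) by auto. rewrite cc_low; auto.
    destruct (Rle_dec t (1/2)).
    + apply Rle_trans with (w (1/2)); [apply F_le; auto; lra | rewrite HW; lra].
    + rewrite HW; lra.
  - rewrite (HW t) by lra. apply HW. pose proof (cc_high t). lra.
Qed.

Lemma kk_conj_W : forall g gi, thompsonF g -> thompsonF gi ->
  (forall t, g (gi t) = t) -> (forall t, gi (g t) = t) -> g (1/4) <= 1/2 ->
  forall t, 1/2 <= t -> g (kk (gi t)) = t.
Proof.
  intros g gi Hg Hgi Hr Hl H t Ht.
  assert (1/4 <= gi t) by (rewrite <- (Hl (1/4)); apply F_le; auto; lra).
  rewrite kk_high; auto.
Qed.

Lemma dichot : forall x a b, thompsonF x -> a < b -> x a <= b \/ finv x a <= b.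
Proof.
  intros x a b Hx Hab. destruct (Rle_dec (x a) b) as [H|H]; [left; auto|right].
  assert (finv x a < finv x (x a)). { apply F_strict. apply F_inv; auto. lra. }
  rewrite finv_l in H0; auto. lra.
Qed.

Lemma extend3 : forall X k (u : nat -> X), (3 <= k)%nat -> distinct_tuple X k u ->
  forall p0 p1 p2 : X, p0 <> p1 -> p0 <> p2 -> p1 <> p2 ->
  exists t, distinct_tuple X k t /\ t 0%nat = p0 /\ t 1%nat = p1 /\ t 2%nat = p2.
Proof.
  intros X k u Hk Hu p0 p1 p2 H01 H02 H12.
  set (fb := fun i => if excluded_middle_informative (u i = p0 \/ u i = p1 \/ u i = p2) then false else true).
  set (L := filter fb (seq 0 k)).
  set (L' := filter (fun i => negb (fb i)) (seq 0 k)).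
  assert (Hlen : (length L + length L' = k)%nat).
  { unfold L, L'. rewrite filter_length. apply length_seq. }
  assert (HL' : (length L' <= 3)%nat).
  { rewrite <- (length_map u L').
    change 3%nat with (length [p0; p1; p2]). apply NoDup_incl_length.
    - apply NoDup_map_NoDup_ForallPairs.
      + intros a b Ha Hb Hab. unfold L' in Ha, Hb. apply filter_In in Ha, Hb.
        destruct Ha as [Ha _]; destruct Hb as [Hb _].
        apply in_seq in Ha, Hb. apply Hu; [lia|lia|exact Hab].
      + apply NoDup_filter, seq_NoDup.
    - intros y Hy. apply in_map_iff in Hy. destruct Hy as [i [<- Hi]].
      unfold L' in Hi. apply filter_In in Hi. destruct Hi as [_ Hi].
      unfold fb in Hi. destruct excluded_middle_informative as [H|H]; [|discriminate].
      destruct H as [H|[H|H]]; rewrite H; simpl; tauto. }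
  assert (HinL : forall a, (a < length L)%nat -> (nth a L 0%nat < k)%nat /\
            ~ (u (nth a L 0%nat) = p0 \/ u (nth a L 0%nat) = p1 \/ u (nth a L 0%nat) = p2)).
  { intros a Ha. assert (Hin := nth_In L 0%nat Ha). unfold L in Hin. apply filter_In in Hin.
    destruct Hin as [Hs Hf]. apply in_seq in Hs. fold L in Hs, Hf. split; [lia|].
    unfold fb in Hf. destruct excluded_middle_informative; [discriminate|auto]. }
  assert (HND : NoDup L) by (apply NoDup_filter, seq_NoDup).
  exists (fun i => match i with O => p0 | 1%nat => p1 | 2%nat => p2 | S (S (S j)) => u (nth j L 0%nat) end).
  split; [|split; [reflexivity|split; reflexivity]].
  intros i j Hi Hj Heq.
  destruct i as [|[|[|i]]]; destruct j as [|[|[|j]]]; auto; try congruence;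
  try (exfalso; destruct (HinL i ltac:(lia)) as [_ Hn]; apply Hn; auto; fail);
  try (exfalso; destruct (HinL j ltac:(lia)) as [_ Hn]; apply Hn; auto; fail).
  f_equal. f_equal. f_equal.
  destruct (HinL i ltac:(lia)) as [Hi' _]. destruct (HinL j ltac:(lia)) as [Hj' _].
  apply (proj1 (NoDup_nth L 0%nat) HND); try lia. apply Hu; auto.
Qed.

Definition trans3 X (act : (R -> R) -> X -> X) := forall p0 p1 p2 q0 q1 q2 : X,
  p0 <> p1 -> p0 <> p2 -> p1 <> p2 -> q0 <> q1 -> q0 <> q2 -> q1 <> q2 ->
  exists g, thompsonF g /\ act g p0 = q0 /\ act g p1 = q1 /\ act g p2 = q2.

Lemma get_trans3 : forall k X act, (3 <= k)%nat -> F_k_transitive X act k -> trans3 X act.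
Proof.
  intros k X act Hk [[u Hu] Ht] p0 p1 p2 q0 q1 q2 H1 H2 H3 H4 H5 H6.
  destruct (extend3 X k u Hk Hu p0 p1 p2 H1 H2 H3) as [tp [Htp [E0 [E1 E2]]]].
  destruct (extend3 X k u Hk Hu q0 q1 q2 H4 H5 H6) as [tq [Htq [F0 [F1 F2]]]].
  destruct (Ht tp tq Htp Htq) as [g [Hg Hgi]].
  exists g. split; auto.
  rewrite <- E0, <- E1, <- E2, <- F0, <- F1, <- F2. repeat split; apply Hgi; lia.
Qed.

Definition Wf (f : R -> R) := forall t, 1/2 <= t -> f t = t.

Lemma finv_kk_W : forall t, 1/4 <= t -> finv kk t = t.
Proof. intros t Ht. rewrite <- (kk_high t) at 1 by auto. apply finv_l, kk_F. Qed.

Lemma free_core : forall X act, F_action X act ->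
  (forall f, thompsonF f -> Wf f -> forall p, act f p = p -> forall t, f t = t) ->
  forall g gi, thompsonF g -> thompsonF gi ->
  (forall t, g (gi t) = t) -> (forall t, gi (g t) = t) -> g (1/4) <= 1/2 ->
  forall p, act g p = p -> act g (act kk p) = act kk p ->
  forall q, act g (act kk q) = act kk (act g q).
Proof.
  intros X act Ha Free g gi Hg Hgi Hr Hl H14 p Hp Hkp q.
  set (h := fun t => g (kk (gi t))).
  assert (Hh : thompsonF h) by (unfold h; apply F_comp; [auto|apply F_comp; [apply kk_F|auto]]).
  assert (Hact : forall q, act h q = act g (act kk (act gi q))).
  { intro q0. unfold h. apply act_conj; auto. apply kk_F. }
  assert (Hgip : act gi p = p).
  { rewrite <- Hp at 1. apply act_inv_pair; auto. }
  assert (Hhp : act h p = act kk p) by (rewrite Hact, Hgip; auto).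
  set (f2 := fun t => finv kk (h t)).
  assert (Hki : thompsonF (finv kk)) by (apply F_inv, kk_F).
  assert (Hf2 : thompsonF f2) by (unfold f2; apply F_comp; auto).
  assert (HW2 : Wf f2).
  { intros t Ht. unfold f2, h. rewrite (kk_conj_W g gi); auto. apply finv_kk_W. lra. }
  assert (Hf2p : act f2 p = p).
  { unfold f2. rewrite (act_comp X act Ha (finv kk) h); auto. rewrite Hhp.
    apply act_inv_l; auto. apply kk_F. }
  assert (Ehk : forall t, h t = kk t).
  { intro t. rewrite <- (finv_r kk kk_F (h t)). f_equal. apply (Free f2 Hf2 HW2 p Hf2p). }
  rewrite <- (act_ext X act h kk Ehk (act g q)). rewrite Hact.
  rewrite (act_inv_pair X act Ha g gi); auto.
Qed.

Lemma free_case : forall X act, F_action X act -> trans3 X act -> forall p : X,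
  (forall f, thompsonF f -> Wf f -> forall p, act f p = p -> forall t, f t = t) -> False.
Proof.
  intros X act Ha H3 p Free.
  assert (HkF := kk_F). assert (Hki : thompsonF (finv kk)) by (apply F_inv, kk_F).
  assert (Wk : Wf kk) by (intros t Ht; apply kk_high; lra).
  set (K := act kk). set (Ki := act (finv kk)).
  assert (Kinj : forall a b, K a = K b -> a = b) by (apply act_inj; auto).
  assert (KKi : forall a, K (Ki a) = a) by (intro; apply act_inv_r; auto).
  assert (N1 : K p <> p).
  { intro E. apply kk_1. apply (Free kk HkF Wk p E). }
  assert (F2 : thompsonF (fun t => kk (kk t))) by (apply F_comp; auto).
  assert (N2 : K (K p) <> p).
  { intro E. apply kk_2. refine (Free _ F2 _ p _ (1/8)).
    - intros t Ht. repeat rewrite (Wk t Ht). auto.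
    - rewrite (act_comp X act Ha kk kk); auto. }
  assert (F3 : thompsonF (fun t => kk (kk (kk t)))) by (apply F_comp; auto).
  assert (N3 : K (K (K p)) <> p).
  { intro E. apply kk_3. refine (Free _ F3 _ p _ (1/8)).
    - intros t Ht. repeat rewrite (Wk t Ht). auto.
    - rewrite (act_comp X act Ha kk (fun t => kk (kk t))); auto.
    rewrite (act_comp X act Ha kk kk); auto. }
  destruct (H3 p (K p) (K (K p)) p (K p) (Ki p)) as [x [Hx [E0 [E1 E2]]]].
  - intro E. apply N1. auto.
  - intro E. apply N2. auto.
  - intro E. apply N1. symmetry. apply Kinj. auto.
  - intro E. apply N1. auto.
  - intro E. apply N1. rewrite E at 1. apply KKi.
  - intro E. apply N2. rewrite E. apply KKi.
  - assert (Hxi : thompsonF (finv x)) by (apply F_inv; auto).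
    destruct (dichot x (1/4) (1/2) Hx ltac:(lra)) as [D|D].
    + assert (C := free_core X act Ha Free x (finv x) Hx Hxi (finv_r x Hx) (finv_l x Hx) D p E0 E1).
      fold K in C. assert (E : Ki p = K (K p)) by (rewrite <- E2, C, E1; reflexivity).
      apply N3. rewrite <- E. apply KKi.
    + assert (Xip : act (finv x) p = p) by (rewrite <- E0 at 1; apply act_inv_l; auto).
      assert (XiKp : act (finv x) (K p) = K p) by (rewrite <- E1 at 1; apply act_inv_l; auto).
      assert (C := free_core X act Ha Free (finv x) x Hxi Hx (finv_l x Hx) (finv_r x Hx) D p Xip XiKp).
      assert (XiKip : act (finv x) (Ki p) = K (K p)) by (rewrite <- E2; apply act_inv_l; auto).
      apply N3. rewrite <- XiKip. fold K in C. rewrite <- C. unfold Ki. rewrite KKi. auto.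
Qed.

Lemma fixed_core : forall X act, F_action X act ->
  forall g gi w, thompsonF g -> thompsonF gi -> thompsonF w ->
  (forall t, g (gi t) = t) -> (forall t, gi (g t) = t) -> Wf w -> g (1/2) <= 3/4 ->
  forall s m, act cc m = s -> act g (act w (act gi s)) = s -> act g (act w (act gi m)) <> m -> False.
Proof.
  intros X act Ha g gi w Hg Hgi Hw Hr Hl HW H12 s m Hs Ys Ym.
  set (y := fun t => g (w (gi t))).
  assert (Hy : thompsonF y) by (unfold y; apply F_comp; [auto|apply F_comp; auto]).
  assert (Hya : forall q, act y q = act g (act w (act gi q))) by (intro; unfold y; apply act_conj; auto).
  assert (Comm : act y (act cc m) = act cc (act y m)).
  { rewrite <- (act_comp X act Ha y cc); auto using cc_F.
    rewrite <- (act_comp X act Ha cc y); auto using cc_F.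
    apply act_ext. intro t. unfold y. apply conj_comm_c; auto. }
  rewrite Hs, !Hya, Ys in Comm. apply Ym.
  apply (act_inj X act Ha cc cc_F). rewrite <- Comm. auto.
Qed.

Lemma fixed_case : forall X act, F_action X act -> F_faithful X act -> trans3 X act ->
  forall w, thompsonF w -> Wf w -> forall r0, act w r0 = r0 -> ~ (forall t, w t = t) -> False.
Proof.
  intros X act Ha Hfa H3 w Hw HW r0 Hr0 Hne.
  destruct (act_moved X act Hfa w Hw) as [m' Hm'].
  { apply NNPP. intro H. apply Hne. intro t. apply NNPP. intro H'. apply H. exists t; auto. }
  destruct (act_moved X act Hfa cc cc_F) as [m Hm]. { exists (7/8). apply cc_78. }
  set (A := act w) in *. set (C := act cc) in *.
  assert (AC : forall q, A (C q) = C (A q)).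
  { intro q. unfold A, C. rewrite <- (act_comp X act Ha w cc); auto using cc_F.
    rewrite <- (act_comp X act Ha cc w); auto using cc_F. apply act_ext. intro t. apply w_comm_c; auto. }
  assert (Ainj : forall a b, A a = A b -> a = b) by (apply act_inj; auto).
  assert (Cinj : forall a b, C a = C b -> a = b) by (apply act_inj; auto using cc_F).
  set (s := C m).
  assert (Fin : forall x, thompsonF x ->
     (act x (A (act (finv x) s)) = s) -> (act x (A (act (finv x) m)) <> m) ->
     (act (finv x) (A (act x s)) = s) -> (act (finv x) (A (act x m)) <> m) -> False).
  { intros x Hx Y1s Y1m Y2s Y2m.
    assert (Hxi : thompsonF (finv x)) by (apply F_inv; auto).
    destruct (dichot x (1/2) (3/4) Hx ltac:(lra)) as [D|D].
    - apply (fixed_core X act Ha x (finv x) w Hx Hxi Hw (finv_r x Hx) (finv_l x Hx) HW D s m); auto.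
    - apply (fixed_core X act Ha (finv x) x w Hxi Hx Hw (finv_l x Hx) (finv_r x Hx) HW D s m); auto. }
  destruct (classic (A m = m)) as [Am|Am].
  - assert (As : A s = s) by (unfold s; rewrite AC, Am; auto).
    destruct (H3 s m m' s m' m) as [x [Hx [E0 [E1 E2]]]].
    + intro E. apply Hm. exact E.
    + intro E. apply Hm'. rewrite <- E. exact As.
    + intro E. apply Hm'. rewrite <- E. exact Am.
    + intro E. apply Hm'. rewrite <- E. exact As.
    + intro E. apply Hm. exact E.
    + intro E. apply Hm'. rewrite E. exact Am.
    + set (Xi := act (finv x)).
      assert (Xinv : forall q, Xi (act x q) = q) by (intro; apply act_inv_l; auto).
      assert (Xinv' : forall q, act x (Xi q) = q) by (intro; apply act_inv_r; auto).
      assert (Xis : Xi s = s) by (rewrite <- E0 at 1; auto).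
      assert (Xim : Xi m = m') by (rewrite <- E2; auto).
      assert (Xim' : Xi m' = m) by (rewrite <- E1; auto).
      apply (Fin x Hx); fold Xi.
      * rewrite Xis, As. auto.
      * rewrite Xim. intro E. apply Hm'. apply (act_inj X act Ha x Hx). rewrite E2. auto.
      * rewrite E0, As. auto.
      * rewrite E1. intro E. apply Hm'. apply (act_inj X act Ha (finv x)); [apply F_inv; auto|].
        fold Xi. rewrite Xim'. auto.
  - assert (As : A s <> s).
    { intro E. apply Am. apply Cinj. rewrite <- AC. exact E. }
    destruct (H3 r0 s m s r0 m) as [x [Hx [E0 [E1 E2]]]].
    + intro E. apply As. rewrite <- E. exact Hr0.
    + intro E. apply Am. rewrite <- E. exact Hr0.
    + intro E. apply Hm. exact E.
    + intro E. apply As. rewrite E. exact Hr0.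
    + intro E. apply Hm. exact E.
    + intro E. apply Am. rewrite <- E. exact Hr0.
    + set (Xi := act (finv x)).
      assert (Xinv : forall q, Xi (act x q) = q) by (intro; apply act_inv_l; auto).
      assert (Xis : Xi s = r0) by (rewrite <- E0; auto).
      assert (Xir : Xi r0 = s) by (rewrite <- E1; auto).
      assert (Xim : Xi m = m) by (rewrite <- E2 at 1; auto).
      apply (Fin x Hx); fold Xi.
      * rewrite Xis, Hr0. auto.
      * rewrite Xim. intro E. apply Am. apply (act_inj X act Ha x Hx). rewrite E2. auto.
      * rewrite E1, Hr0. auto.
      * rewrite E2. intro E. apply Am. apply (act_inj X act Ha (finv x)); [apply F_inv; auto|].
        fold Xi. rewrite Xim. auto.
Qed.

Theorem corollary5p3 :
  forall (k : nat) (X : Type) (act : (R -> R) -> X -> X),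
    F_action X act -> F_faithful X act -> F_k_transitive X act k ->
    (k <= 2)%nat.
Proof.
  intros k X act Ha Hfa Hk.
  destruct (le_lt_dec k 2) as [H|H]; auto. exfalso.
  assert (H3 : trans3 X act) by (apply (get_trans3 k); auto; lia).
  destruct Hk as [[u _] _].
  apply (free_case X act Ha H3 (u 0%nat)).
  intros f Hf HW p Hp. apply NNPP. intro Hne.
  apply (fixed_case X act Ha Hfa H3 f Hf HW p Hp Hne).
Qed.
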